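(* For any integer $n\geq 2$ and positive numbers $V, L, \epsilon$, there is a universal constant $C>0$ such that $$\log\mathcal{N}(\mathcal{T}_{n,n,V,L},\epsilon) \leq C\log n\,\log\Big(1 + \frac{2Ln}{\epsilon}\Big)\max\Big\{\frac{V^2\log n}{\epsilon^2},1\Big\}.$$
   Context: $\mathcal{T}_{m,n,V,L} = \{\theta\in\mathbb{R}^{m\times n}: \mathrm{TV}(\theta)\le V,\ \|\theta\|_\infty\le L\}$, where $\mathrm{TV}(\theta)$ is the unnormalized total variation, i.e. the sum of $|\theta_u-\theta_v|$ over all pairs $u,v$ of horizontally or vertically adjacent entries, and $\|\theta\|_\infty$ is the maximum absolute entry. $\mathcal{N}(A,\epsilon)$ is the minimal number of Euclidean (Frobenius) balls of radius $\epsilon$ needed to cover $A$. *)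

(* Defs.v *)
From HB Require Import structures.
From mathcomp Require Import all_boot all_order all_algebra.
From mathcomp Require Import boolp classical_sets reals exp.
Set Implicit Arguments. Unset Strict Implicit. Unset Printing Implicit Defensive.
Import Order.TTheory GRing.Theory Num.Theory.
Local Open Scope ring_scope.
Local Open Scope classical_set_scope.

Section Defs.
Variable R : realType.

(* Unnormalized anisotropic total variation: sum of |theta_u - theta_v| over
   all (unordered) pairs of horizontally or vertically adjacent entries. *)
Definition TV (m n : nat) (theta : 'M[R]_(m, n)) : R :=
  \sum_(i : 'I_m) \sum_(j : 'I_n) \sum_(j' : 'I_n | j.+1 == j')
      `|theta i j - theta i j'|
  + \sum_(i : 'I_m) \sum_(i' : 'I_m | i.+1 == i') \sum_(j : 'I_n)
      `|theta i j - theta i' j|.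

Definition linf (m n : nat) (theta : 'M[R]_(m, n)) : R :=
  \big[Order.max/0]_(i : 'I_m) \big[Order.max/0]_(j : 'I_n) `|theta i j|.

Definition frob_dist (m n : nat) (a b : 'M[R]_(m, n)) : R :=
  Num.sqrt (\sum_(i : 'I_m) \sum_(j : 'I_n) (a i j - b i j) ^+ 2).

Definition TVclass (m n : nat) (V L : R) : set 'M[R]_(m, n) :=
  [set theta | TV theta <= V /\ linf theta <= L].

Definition is_cover (m n : nat) (A : set 'M[R]_(m, n)) (eps : R)
    (s : seq 'M[R]_(m, n)) : Prop :=
  forall theta, A theta -> exists2 c, c \in s & frob_dist theta c <= eps.

Definition has_cover_of_size (m n : nat) (A : set 'M[R]_(m, n)) (eps : R)
    : pred nat :=
  fun k => `[< exists s : seq 'M[R]_(m, n), size s = k /\ is_cover A eps s >].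

(* Covering number N(A, eps): minimal number of balls; 0 if no finite cover
   exists (never the case for the bounded sets considered here). *)
Definition covering_number (m n : nat) (A : set 'M[R]_(m, n)) (eps : R) : nat :=
  match pselect (exists k, has_cover_of_size A eps k) with
  | left h => ex_minn h
  | right _ => 0%N
  end.

End Defs.

(* Main.v *)
Require Import Defs.
From HB Require Import structures.
From mathcomp Require Import all_boot all_order all_algebra.
From mathcomp Require Import boolp classical_sets reals exp.
From mathcomp Require Import zify ring lra.
Import Order.TTheory GRing.Theory Num.Theory.
Local Open Scope ring_scope.

Section Seg.
Context {R : realType}.
Implicit Types u : nat -> R.

Definition seg u (a b : nat) : R :=
  \sum_(a <= k < b) (if (k.+1 < b)%N then `|u k - u k.+1| else 0).

Lemma seg_ge0 u a b : 0 <= seg u a b.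
Proof. apply: sumr_ge0 => k _; case: ifP => _ //. Qed.

Lemma seg_split u a m b : (a <= m <= b)%N -> seg u a m + seg u m b <= seg u a b.
Proof.
move=> /andP[am mb]; rewrite /seg (big_cat_nat am mb) /=.
apply: lerD; last first.
  by rewrite le_eqVlt; apply/orP; left; apply/eqP/eq_big_nat => k /andP[_ kb].
apply: ler_sum_nat => k /andP[ak km].
case: ifP => h1; first by rewrite ifT //; apply: leq_trans h1 mb.
by case: ifP.
Qed.

Lemma seg_small u a b : (b <= a.+1)%N -> seg u a b = 0.
Proof.
move=> h; rewrite /seg big_nat_cond big1 // => k /andP[/andP[ak kb] _].
by rewrite ifF //; apply/negbTE; rewrite -leqNgt; lia.
Qed.

Lemma tele0 u j l : (j <= l)%N -> `|u j - u l| <= \sum_(j <= k < l) `|u k - u k.+1|.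
Proof.
elim: l => [|l IH]; first by rewrite leqn0 => /eqP ->; rewrite big_geq // subrr normr0.
rewrite leq_eqVlt => /orP[/eqP ->|]; first by rewrite big_geq // subrr normr0.
rewrite ltnS => jl; rewrite big_nat_recr //=.
have -> : u j - u l.+1 = (u j - u l) + (u l - u l.+1) by ring.
apply: le_trans (ler_normD _ _) _.
by apply: lerD => //; apply: IH.
Qed.

Lemma seg_tele u a b j l : (a <= j < b)%N -> (a <= l < b)%N -> `|u j - u l| <= seg u a b.
Proof.
wlog jl : j l / (j <= l)%N.
  move=> W hj hl; case: (leqP j l) => h; first exact: W.
  by rewrite distrC; apply: W => //; apply: ltnW.
move=> /andP[aj jb] /andP[al lb].
apply: le_trans (@tele0 u j l jl) _.
rewrite /seg (big_cat_nat aj (ltnW jb)) /= (big_cat_nat jl (ltnW lb)) /=.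
have e : \sum_(j <= k < l) `|u k - u k.+1| =
   \sum_(j <= k < l) (if (k.+1 < b)%N then `|u k - u k.+1| else 0).
  by apply/eq_big_nat => k /andP[_ kl]; rewrite ifT //; apply: leq_ltn_trans lb.
have h1 : 0 <= \sum_(a <= k < j) (if (k.+1 < b)%N then `|u k - u k.+1| else 0).
  by apply: sumr_ge0 => k _; case: ifP.
have h2 : 0 <= \sum_(l <= k < b) (if (k.+1 < b)%N then `|u k - u k.+1| else 0).
  by apply: sumr_ge0 => k _; case: ifP.
rewrite e; lra.
Qed.
End Seg.

Section Rect.
Context {R : realType}.
Variable f : nat -> nat -> R.

Definition TVr (r0 r1 c0 c1 : nat) : R :=
  \sum_(r0 <= i < r1) seg (f i) c0 c1 + \sum_(c0 <= j < c1) seg (fun i => f i j) r0 r1.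

Definition err (r0 r1 c0 c1 : nat) (c : R) : R :=
  \sum_(r0 <= i < r1) \sum_(c0 <= j < c1) (f i j - c) ^+ 2.

Lemma TVr_ge0 r0 r1 c0 c1 : 0 <= TVr r0 r1 c0 c1.
Proof. by rewrite /TVr addr_ge0 //; apply: sumr_ge0 => *; apply: seg_ge0. Qed.

Lemma err_ge0 r0 r1 c0 c1 c : 0 <= err r0 r1 c0 c1 c.
Proof. by apply: sumr_ge0 => *; apply: sumr_ge0 => *; apply: sqr_ge0. Qed.

Lemma TVr_small r0 r1 c0 c1 : (r1 <= r0.+1)%N -> (c1 <= c0.+1)%N -> TVr r0 r1 c0 c1 = 0.
Proof.
move=> hr hc; rewrite /TVr big1 ?add0r; last by move=> i _; rewrite seg_small.
by rewrite big1 // => j _; rewrite seg_small.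
Qed.


Lemma TVr_split r0 rm r1 c0 cm c1 : (r0 <= rm <= r1)%N -> (c0 <= cm <= c1)%N ->
  TVr r0 rm c0 cm + TVr r0 rm cm c1 + TVr rm r1 c0 cm + TVr rm r1 cm c1
  <= TVr r0 r1 c0 c1.
Proof.
move=> hr hc; case/andP: (hr) => h1 h2; case/andP: (hc) => h3 h4.
rewrite /TVr (big_cat_nat h1 h2) (big_cat_nat h3 h4) /=.
have A : forall a b, \sum_(a <= i < b) seg (f i) c0 cm + \sum_(a <= i < b) seg (f i) cm c1
   <= \sum_(a <= i < b) seg (f i) c0 c1.
  by move=> a b; rewrite -big_split; apply: ler_sum => i _; apply: seg_split.
have B : forall a b, \sum_(a <= j < b) seg (fun i => f i j) r0 rm
     + \sum_(a <= j < b) seg (fun i => f i j) rm r1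
   <= \sum_(a <= j < b) seg (fun i => f i j) r0 r1.
  by move=> a b; rewrite -big_split; apply: ler_sum => i _; apply: seg_split.
have := A r0 rm; have := A rm r1; have := B c0 cm; have := B cm c1.
lra.
Qed.

Lemma sqr_le_prod (x A B : R) : `|x| <= A -> `|x| <= B -> x ^+ 2 <= A * B.
Proof.
move=> hA hB; rewrite -real_normK ?num_real // expr2.
by apply: ler_pM => //; apply: normr_ge0.
Qed.

Lemma poincare r0 r1 c0 c1 : (r0 < r1)%N -> (c0 < c1)%N ->
  (r1 - r0 <= (c1 - c0).+1)%N -> (c1 - c0 <= (r1 - r0).+1)%N ->
  exists i0 j0, [/\ (r0 <= i0 < r1)%N, (c0 <= j0 < c1)%N &
     err r0 r1 c0 c1 (f i0 j0) <= 4 * TVr r0 r1 c0 c1 ^+ 2].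
Proof.
move=> hr hc hab hba.
pose g i := seg (f i) c0 c1.
pose h j := seg (fun i => f i j) r0 r1.
pose G := \sum_(r0 <= i < r1) g i.
pose H := \sum_(c0 <= j < c1) h j.
pose a : R := (r1 - r0)%:R. pose b : R := (c1 - c0)%:R.
have ha : 1 <= a by rewrite /a ler1n; lia.
have hb : 1 <= b by rewrite /b ler1n; lia.
have hab' : a <= b + 1 by rewrite /a /b natr1 ler_nat; lia.
have hba' : b <= a + 1 by rewrite /b /a natr1 ler_nat; lia.
have G0 : 0 <= G by apply: sumr_ge0 => *; apply: seg_ge0.
have H0 : 0 <= H by apply: sumr_ge0 => *; apply: seg_ge0.
have TVE : TVr r0 r1 c0 c1 = G + H by [].
have pt : forall i j k l, (r0 <= i < r1)%N -> (c0 <= j < c1)%N ->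
    (r0 <= k < r1)%N -> (c0 <= l < c1)%N ->
    (f i j - f k l) ^+ 2 <= (g i + h l) * (h j + g k).
  move=> i j k l hi hj hk hl; apply: sqr_le_prod.
    have -> : f i j - f k l = (f i j - f i l) + (f i l - f k l) by ring.
    apply: le_trans (ler_normD _ _) _; apply: lerD.
      exact: seg_tele.
    exact: (@seg_tele _ (fun i => f i l)).
  have -> : f i j - f k l = (f i j - f k j) + (f k j - f k l) by ring.
  apply: le_trans (ler_normD _ _) _; apply: lerD.
    exact: (@seg_tele _ (fun i => f i j)).
  exact: seg_tele.
have S : \sum_(r0 <= k < r1) \sum_(c0 <= l < c1) err r0 r1 c0 c1 (f k l)
    <= (b * G + a * H) ^+ 2.
  apply: le_trans (_ : \sum_(r0 <= k < r1) \sum_(c0 <= l < c1)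
      ((G + a * h l) * (H + b * g k)) <= _).
    apply: ler_sum_nat => k hk; apply: ler_sum_nat => l hl.
    rewrite /err.
    have -> : G + a * h l = \sum_(r0 <= i < r1) (g i + h l).
      by rewrite big_split /= sumr_const_nat mulr_natl.
    rewrite mulr_suml; apply: ler_sum_nat => i hi.
    have -> : H + b * g k = \sum_(c0 <= j < c1) (h j + g k).
      by rewrite big_split /= sumr_const_nat mulr_natl.
    rewrite mulr_sumr; apply: ler_sum_nat => j hj.
    exact: pt.
  have -> : (b * G + a * H) ^+ 2 =
     \sum_(r0 <= k < r1) \sum_(c0 <= l < c1) ((G + a * h l) * (H + b * g k)).
    have -> : \sum_(r0 <= k < r1) \sum_(c0 <= l < c1) ((G + a * h l) * (H + b * g k))
       = \sum_(r0 <= k < r1) ((b * G + a * H) * (H + b * g k)).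
      apply: eq_bigr => k _; rewrite -mulr_suml; congr (_ * _).
      rewrite big_split /= sumr_const_nat -mulr_sumr.
      by rewrite /b mulr_natl.
    rewrite -mulr_sumr big_split /= sumr_const_nat -mulr_sumr -/a.
    by rewrite expr2 mulr_natl; ring.
  by [].
have S2 : (b * G + a * H) ^+ 2 <= a * b * (4 * (G + H) ^+ 2).
  have e1 : b * b <= 2 * a * b by nra.
  have e2 : a * a <= 2 * a * b by nra.
  have e3 : (b * G + a * H) ^+ 2 <= 2 * (b * b) * G ^+ 2 + 2 * (a * a) * H ^+ 2.
    have := sqr_ge0 (b * G - a * H); nra.
  apply: le_trans e3 _.
  have : 0 <= G * H by apply: mulr_ge0.
  have : 0 <= a * b by nra.
  have : b * b * G ^+ 2 <= 2 * a * b * G ^+ 2 by apply: ler_wpM2r => //; apply: sqr_ge0.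
  have : a * a * H ^+ 2 <= 2 * a * b * H ^+ 2 by apply: ler_wpM2r => //; apply: sqr_ge0.
  nra.
case: (pselect (exists i0 j0, [/\ (r0 <= i0 < r1)%N, (c0 <= j0 < c1)%N &
     err r0 r1 c0 c1 (f i0 j0) <= 4 * TVr r0 r1 c0 c1 ^+ 2])) => // Hn; exfalso.
have L : \sum_(r0 <= k < r1) \sum_(c0 <= l < c1) (4 * TVr r0 r1 c0 c1 ^+ 2)
   < \sum_(r0 <= k < r1) \sum_(c0 <= l < c1) err r0 r1 c0 c1 (f k l).
  apply: ltr_sum_nat => // k hk; apply: ltr_sum_nat => // l hl.
  rewrite ltNge; apply/negP => hle; apply: Hn; exists k, l; split => //.
rewrite !sumr_const_nat -/a -/b in L.
have : 4 * TVr r0 r1 c0 c1 ^+ 2 *+ (c1 - c0) *+ (r1 - r0) = a * b * (4 * (G + H) ^+ 2).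
  by rewrite -mulr_natr -mulr_natr -/a -/b TVE; ring.
move: S S2 L; lra.
Qed.
End Rect.

Definition rect := (nat * nat * nat * nat)%type.
Definition rr0 (q : rect) := q.1.1.1.
Definition rr1 (q : rect) := q.1.1.2.
Definition rc0 (q : rect) := q.1.2.
Definition rc1 (q : rect) := q.2.
Definition inR (q : rect) (i j : nat) : bool :=
  (rr0 q <= i < rr1 q)%N && (rc0 q <= j < rc1 q)%N.
Definition goodq (q : rect) : bool :=
  [&& (rr0 q <= rr1 q)%N, (rc0 q <= rc1 q)%N,
      (rr1 q + rc0 q <= (rc1 q + rr0 q).+1)%N & (rc1 q + rr0 q <= (rr1 q + rc0 q).+1)%N].
Definition subq (q Q : rect) : bool :=
  [&& (rr0 Q <= rr0 q)%N, (rr1 q <= rr1 Q)%N, (rc0 Q <= rc0 q)%N & (rc1 q <= rc1 Q)%N].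

Lemma goodq_full N : goodq (0, N, 0, N).
Proof. by rewrite /goodq /rr0 /rr1 /rc0 /rc1 /= addn0 leqnSn. Qed.

Section Part.
Context {R : realType}.
Variable f : nat -> nat -> R.
Definition TVq (q : rect) := TVr f (rr0 q) (rr1 q) (rc0 q) (rc1 q).

Lemma rpartition (t : R) : 0 < t -> forall d r0 r1 c0 c1,
  goodq (r0, r1, c0, c1) -> (r1 <= r0 + 2 ^ d)%N -> (c1 <= c0 + 2 ^ d)%N ->
  exists P : seq rect, [/\ (forall i j, inR (r0, r1, c0, c1) i j -> has (fun q => inR q i j) P),
   all (fun q => goodq q && subq q (r0, r1, c0, c1) && (TVq q <= t)) P,
   \sum_(q <- P) TVq q <= TVr f r0 r1 c0 c1 &
   (size P)%:R <= 1 + 3 * d.+1%:R * TVr f r0 r1 c0 c1 / t].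
Proof.
move=> t0 d; elim: d => [|d IH] r0 r1 c0 c1 hg hr hc.
  have T0 : TVr f r0 r1 c0 c1 = 0 by apply: TVr_small; lia.
  exists [:: (r0, r1, c0, c1)]; split => //.
  - by move=> i j h; rewrite /= h.
  - rewrite /= hg /subq /= !leqnn /TVq /= T0 andbT /=; exact: ltW.
  - by rewrite big_seq1.
  - by rewrite T0 mulr0 mul0r addr0.
case: (leP (TVr f r0 r1 c0 c1) t) => hT.
  exists [:: (r0, r1, c0, c1)]; split => //.
  - by move=> i j h; rewrite /= h.
  - by rewrite /= hg /subq /= !leqnn /TVq /= hT.
  - by rewrite big_seq1.
  - rewrite /= lerDl; apply: divr_ge0; last exact: ltW.
    by apply: mulr_ge0; [apply: mulr_ge0 => //|apply: TVr_ge0].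
have hg' := hg; rewrite /goodq /rr0 /rr1 /rc0 /rc1 /= in hg'; case/and4P: hg' => h1 h2 h3 h4.
rewrite expnS in hr hc.
have p0 : (0 < 2 ^ d)%N by rewrite expn_gt0.
move: (2 ^ d)%N p0 hr hc IH => p p0 hr hc IH.
have [rm rmE] : exists rm, (rm + rm <= r0 + r1 <= (rm + rm).+1)%N.
  exists (r0 + (r1 - r0) %/ 2)%N; have := divn_eq (r1 - r0) 2.
  have := ltn_pmod (r1 - r0) (isT : (0 < 2)%N).
  move: ((r1 - r0) %/ 2)%N ((r1 - r0) %% 2)%N => x y; lia.
have [cm cmE] : exists cm, (cm + cm <= c0 + c1 <= (cm + cm).+1)%N.
  exists (c0 + (c1 - c0) %/ 2)%N; have := divn_eq (c1 - c0) 2.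
  have := ltn_pmod (c1 - c0) (isT : (0 < 2)%N).
  move: ((c1 - c0) %/ 2)%N ((c1 - c0) %% 2)%N => x y; lia.
have hr' : (r0 <= rm <= r1)%N by apply/andP; split; lia.
have hc' : (c0 <= cm <= c1)%N by apply/andP; split; lia.
have gq : forall a b c e, (a <= b)%N -> (c <= e)%N -> (b + c <= (e + a).+1)%N ->
   (e + a <= (b + c).+1)%N -> goodq (a, b, c, e).
  by move=> a b c e *; rewrite /goodq /rr0 /rr1 /rc0 /rc1 /=; apply/and4P.
have g1 := gq r0 rm c0 cm ltac:(lia) ltac:(lia) ltac:(lia) ltac:(lia).
have e1 : (rm <= r0 + p)%N by lia.
have f1 : (cm <= c0 + p)%N by lia.
have g2 := gq r0 rm cm c1 ltac:(lia) ltac:(lia) ltac:(lia) ltac:(lia).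
have e2 : (rm <= r0 + p)%N by lia.
have f2 : (c1 <= cm + p)%N by lia.
have g3 := gq rm r1 c0 cm ltac:(lia) ltac:(lia) ltac:(lia) ltac:(lia).
have e3 : (r1 <= rm + p)%N by lia.
have f3 : (cm <= c0 + p)%N by lia.
have g4 := gq rm r1 cm c1 ltac:(lia) ltac:(lia) ltac:(lia) ltac:(lia).
have e4 : (r1 <= rm + p)%N by lia.
have f4 : (c1 <= cm + p)%N by lia.
have [P1 [cv1 al1 sm1 sz1]] := IH r0 rm c0 cm g1 e1 f1.
have [P2 [cv2 al2 sm2 sz2]] := IH r0 rm cm c1 g2 e2 f2.
have [P3 [cv3 al3 sm3 sz3]] := IH rm r1 c0 cm g3 e3 f3.
have [P4 [cv4 al4 sm4 sz4]] := IH rm r1 cm c1 g4 e4 f4.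
have hsp := @TVr_split _ f _ _ _ _ _ _ hr' hc'.
exists (P1 ++ P2 ++ P3 ++ P4); split.
- clear sm1 sm2 sm3 sm4 sz1 sz2 sz3 sz4 hsp hT t0 IH al1 al2 al3 al4.
  move=> i j; rewrite /inR /rr0 /rr1 /rc0 /rc1 /= => /andP[/andP[hi1 hi2] /andP[hj1 hj2]].
  rewrite !has_cat.
  case: (ltnP i rm) => hi'; case: (ltnP j cm) => hj'.
  + by rewrite cv1 // /inR /rr0 /rr1 /rc0 /rc1 /=; apply/andP; split; apply/andP; split; lia.
  + by rewrite cv2 ?orbT // /inR /rr0 /rr1 /rc0 /rc1 /=; apply/andP; split; apply/andP; split; lia.
  + by rewrite cv3 ?orbT // /inR /rr0 /rr1 /rc0 /rc1 /=; apply/andP; split; apply/andP; split; lia.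
  + by rewrite cv4 ?orbT // /inR /rr0 /rr1 /rc0 /rc1 /=; apply/andP; split; apply/andP; split; lia.
- clear sm1 sm2 sm3 sm4 sz1 sz2 sz3 sz4 hsp hT t0 IH cv1 cv2 cv3 cv4.
  rewrite !all_cat; apply/and4P; split.
  + apply: sub_all al1 => q /andP[/andP[g s] tt]; rewrite g tt andbT /=.
    move: s; rewrite /subq /rr0 /rr1 /rc0 /rc1 /=.
    move=> /and4P[a1 a2 a3 a4]; apply/and4P;
    split; clear -a1 a2 a3 a4 rmE cmE h1 h2 h3 h4; lia.
  + apply: sub_all al2 => q /andP[/andP[g s] tt]; rewrite g tt andbT /=.
    move: s; rewrite /subq /rr0 /rr1 /rc0 /rc1 /=.
    move=> /and4P[a1 a2 a3 a4]; apply/and4P;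
    split; clear -a1 a2 a3 a4 rmE cmE h1 h2 h3 h4; lia.
  + apply: sub_all al3 => q /andP[/andP[g s] tt]; rewrite g tt andbT /=.
    move: s; rewrite /subq /rr0 /rr1 /rc0 /rc1 /=.
    move=> /and4P[a1 a2 a3 a4]; apply/and4P;
    split; clear -a1 a2 a3 a4 rmE cmE h1 h2 h3 h4; lia.
  + apply: sub_all al4 => q /andP[/andP[g s] tt]; rewrite g tt andbT /=.
    move: s; rewrite /subq /rr0 /rr1 /rc0 /rc1 /=.
    move=> /and4P[a1 a2 a3 a4]; apply/and4P;
    split; clear -a1 a2 a3 a4 rmE cmE h1 h2 h3 h4; lia.
- rewrite !big_cat /=; move: sm1 sm2 sm3 sm4 hsp; lra.
- rewrite !size_cat !natrD.
  have -> : (d.+2)%:R = d.+1%:R + 1 :> R by rewrite -natr1.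
  move: sz1 sz2 sz3 sz4 hsp hT.
  move: (TVr f r0 r1 c0 c1) (TVr f r0 rm c0 cm) (TVr f r0 rm cm c1)
     (TVr f rm r1 c0 cm) (TVr f rm r1 cm c1) => T T1 T2 T3 T4 sz1 sz2 sz3 sz4 hsp hT.
  move: (d.+1%:R : R) (ler0n R d.+1) => D D0 in sz1 sz2 sz3 sz4 *.
  have ti : 0 < t^-1 by rewrite invr_gt0.
  have k : T1 * t^-1 + T2 * t^-1 + T3 * t^-1 + T4 * t^-1 <= T * t^-1.
    by rewrite -!mulrDl; apply: ler_wpM2r; [exact: ltW|].
  have y1 : 1 < T * t^-1 by rewrite ltr_pdivlMr // mul1r.
  have kD : D * (T1 * t^-1 + T2 * t^-1 + T3 * t^-1 + T4 * t^-1) <= D * (T * t^-1).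
    by apply: ler_wpM2l.
  move: sz1 sz2 sz3 sz4; rewrite -!(mulrA 3) -!(mulrA _ _ t^-1).
  move: (T * t^-1) (T1 * t^-1) (T2 * t^-1) (T3 * t^-1) (T4 * t^-1) k y1 kD
    => y z1 z2 z3 z4 k y1 kD.
  move=> s1 s2 s3 s4.
  have e : 3 * ((D + 1) * y) = 3 * (D * y) + 3 * y by ring.
  rewrite e !mulrDr in kD *.
  move: s1 s2 s3 s4 kD y1 k.
  move: (D * z1) (D * z2) (D * z3) (D * z4) (D * y) => w1 w2 w3 w4 wy.
  lra.
Qed.
End Part.

Section Conv.
Context {R : realType}.
Context {n : nat}.
Local Notation N := n.+1.
Variable th : 'M[R]_(N, N).
Definition fm (i j : nat) : R := th (inord i) (inord j).

Lemma fm_ord (i j : 'I_N) : fm i j = th i j.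
Proof. by rewrite /fm !inord_val. Qed.

Lemma inner_sum (F : 'I_N -> R) (j : nat) :
  \sum_(j' : 'I_N | j.+1 == j') F j' = if (j.+1 < N)%N then F (inord j.+1) else 0.
Proof.
case: ifP => h.
  rewrite (big_pred1 (Ordinal h)); last by move=> k; rewrite /= -val_eqE /= eq_sym.
  by congr F; apply/val_inj; rewrite /= inordK.
rewrite big_pred0 // => k; apply/negbTE; apply/eqP => e.
by move: (ltn_ord k); rewrite -e h.
Qed.

Lemma TV_fm : TVr fm 0 N 0 N = TV th.
Proof.
rewrite /TVr /TV; congr (_ + _).
  rewrite big_mkord; apply: eq_bigr => i _.
  rewrite /seg big_mkord; apply: eq_bigr => j _.
  rewrite (inner_sum (fun j' => `|th i j - th i j'|)).
  by case: ifP => // _; rewrite /fm !inord_val.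
rewrite big_mkord; symmetry.
rewrite (eq_bigr (fun i : 'I_N => \sum_(j : 'I_N) \sum_(i' : 'I_N | i.+1 == i') `|th i j - th i' j|));
  last by move=> i _; rewrite exchange_big.
rewrite exchange_big /=; symmetry; apply: eq_bigr => j _.
rewrite /seg big_mkord; apply: eq_bigr => i _.
rewrite (inner_sum (fun i' => `|th i j - th i' j|)).
by case: ifP => // _; rewrite /fm !inord_val.
Qed.

Lemma fm_bound L : linf th <= L -> forall i j, `|fm i j| <= L.
Proof.
move=> hL i j; apply: le_trans hL; rewrite /fm /linf.
apply: le_trans (le_bigmax _ _ (inord i)).
exact: (le_bigmax _ (fun j => `|th (inord i) j|) (inord j)).
Qed.

End Conv.

Lemma frob_le {R : realType} m n (a b : 'M[R]_(m, n)) (e : R) : 0 <= e ->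
  \sum_(i : 'I_m) \sum_(j : 'I_n) (a i j - b i j) ^+ 2 <= e ^+ 2 -> frob_dist a b <= e.
Proof.
move=> e0 h; rewrite /frob_dist.
apply: le_trans (ler_wsqrtr h) _.
by rewrite sqrtr_sqr ger0_norm.
Qed.

Lemma cov_le {R : realType} m n (A : set 'M[R]_(m, n)) e s :
  is_cover A e s -> (covering_number A e <= size s)%N.
Proof.
move=> hc; rewrite /covering_number.
case: pselect => [h|h].
  case: ex_minnP => k _ hmin; apply: hmin.
  by apply/asboolP; exists s.
by exfalso; apply: h; exists (size s); apply/asboolP; exists s.
Qed.

Section Aux.
Context {R : realType}.

Lemma exists_c (f : nat -> nat -> R) L : 0 <= L -> (forall i j, `|f i j| <= L) ->
  forall q, goodq q -> exists c, `|c| <= L /\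
    err f (rr0 q) (rr1 q) (rc0 q) (rc1 q) c <= 4 * TVq f q ^+ 2.
Proof.
move=> L0 hb [[[a b] c] e]; rewrite /goodq /TVq /rr0 /rr1 /rc0 /rc1 /=.
case/and4P=> h1 h2 h3 h4.
case: (ltnP a b) => hab; case: (ltnP c e) => hce.
- have [i0 [j0 [_ _ hp]]] := @poincare _ f a b c e hab hce ltac:(lia) ltac:(lia).
  by exists (f i0 j0); split.
- exists 0; split; first by rewrite normr0.
  have -> : err f a b c e 0 = 0.
    by rewrite /err big1 // => i _; rewrite big_geq.
  by apply: mulr_ge0 => //; apply: sqr_ge0.
- exists 0; split; first by rewrite normr0.
  have -> : err f a b c e 0 = 0 by rewrite /err big_geq.
  by apply: mulr_ge0 => //; apply: sqr_ge0.
- exists 0; split; first by rewrite normr0.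
  have -> : err f a b c e 0 = 0 by rewrite /err big_geq.
  by apply: mulr_ge0 => //; apply: sqr_ge0.
Qed.

Lemma sum_ind (H : nat -> R) a b N : (a <= b <= N)%N ->
  \sum_(0 <= i < N) (if (a <= i < b)%N then H i else 0) = \sum_(a <= i < b) H i.
Proof.
move=> /andP[ab bN].
rewrite (big_cat_nat (_ : 0 <= a)%N (leq_trans ab bN)) //=.
rewrite (big_cat_nat ab bN) /=.
rewrite big_nat_cond big1 ?add0r; last first.
  by move=> i /andP[/andP[_ ia] _]; rewrite ifF //; apply/negbTE/negP => /andP[ai _]; lia.
rewrite [X in _ + X]big_nat_cond [X in _ + X]big1 ?addr0; last first.
  by move=> i /andP[/andP[bi _] _]; rewrite ifF //; apply/negbTE/negP => /andP[_ ib]; lia.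
by rewrite big_nat_cond [RHS]big_nat_cond; apply: eq_bigr => i /andP[-> _].
Qed.

Lemma mem_le_sum (s : seq rect) (F : rect -> R) x : x \in s ->
  (forall y, 0 <= F y) -> F x <= \sum_(y <- s) F y.
Proof.
move=> hx h0; elim: s hx => // y s IH; rewrite inE big_cons => /orP[/eqP ->|hx].
  by rewrite lerDl; apply: sumr_ge0.
by apply: le_trans (IH hx) _; rewrite lerDr.
Qed.

Lemma sq_tri (a b c S D : R) : (a - b) ^+ 2 <= S -> (b - c) ^+ 2 <= D ^+ 2 ->
  (a - c) ^+ 2 <= 2 * S + 2 * D ^+ 2.
Proof. move=> h1 h2; have := sqr_ge0 (a - 2 * b + c); nra. Qed.

Lemma sum_rect (H : nat -> nat -> R) N (q : rect) :
  (rr0 q <= rr1 q <= N)%N -> (rc0 q <= rc1 q <= N)%N ->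
  \sum_(i < N) \sum_(j < N) (if inR q i j then H i j else 0)
  = \sum_(rr0 q <= i < rr1 q) \sum_(rc0 q <= j < rc1 q) H i j.
Proof.
move=> hr hc.
rewrite -(big_mkord xpredT (fun i => \sum_(j < N) (if inR q i j then H i j else 0))).
rewrite -(sum_ind _ _ _ _ hr); apply: eq_bigr => i _.
rewrite -(big_mkord xpredT (fun j => if inR q i j then H i j else 0)) /inR.
case: ifP => hi; last by rewrite big1 // => j _; rewrite andFb.
by rewrite -(sum_ind _ _ _ _ hc); apply: eq_bigr => j _; rewrite andTb.
Qed.

Lemma gen1 (eps V T : R) : T * (16 * V) = eps ^+ 2 -> 2 * (4 * T * V) * 2 = eps ^+ 2.
Proof. by move=> <-; ring. Qed.
Lemma gen2 (eps D K : R) : D * (2 * K) = eps -> 2 * D ^+ 2 * K * K * 2 = eps ^+ 2.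
Proof. by move=> <-; ring. Qed.
Lemma gen3 (eps D : R) (N : nat) : D * (2 * N%:R) = eps -> 2 * D ^+ 2 *+ N *+ N * 2 = eps ^+ 2.
Proof.
move=> h; rewrite -[2 * D ^+ 2 *+ N]mulr_natr -[_ *+ N]mulr_natr.
by move: h; move: (N%:R : R) => K; apply: gen2.
Qed.
Lemma fin_ineq (a b c z : R) : a * 2 = c -> b * 2 = c -> z <= a -> z + b <= c.
Proof. lra. Qed.

End Aux.

Section Cover.
Context {R : realType}.
Variables (n : nat) (V L eps : R) (d M' m : nat).
Local Notation N := n.+1.
Hypotheses (V0 : 0 < V) (L0 : 0 < L) (e0 : 0 < eps).
Hypothesis hd : (N <= 2 ^ d)%N.
Let t : R := eps ^+ 2 / (16 * V).
Let del : R := eps / (2 * N%:R).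
Hypothesis hM : 2 * L / del < M'.+1%:R.
Hypothesis hm : forall k : nat, k%:R <= 1 + 3 * d.+1%:R * V / t -> (k <= m)%N.

Definition E := ('I_N.+1 * 'I_N.+1 * 'I_N.+1 * 'I_N.+1 * 'I_M'.+1)%type.
Definition rectof (e : E) : rect := (val e.1.1.1.1, val e.1.1.1.2, val e.1.1.2, val e.1.2).
Definition valof (k : nat) : R := - L + k%:R * del.
Definition dec (g : {ffun 'I_m -> E}) : 'M[R]_(N, N) :=
  \matrix_(i, j) match [pick k | inR (rectof (g k)) i j] with
                 | Some k => valof (g k).2 | None => 0 end.

Lemma t_gt0 : 0 < t.
Proof. by rewrite /t divr_gt0 // ?exprn_gt0 // mulr_gt0. Qed.
Lemma del_gt0 : 0 < del.
Proof. by rewrite /del divr_gt0 // mulr_gt0. Qed.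

Lemma round (c : R) : `|c| <= L ->
  (Num.truncn ((c + L) / del) < M'.+1)%N /\ `|c - valof (Num.truncn ((c + L) / del))| <= del.
Proof.
move=> hc; have dp := del_gt0.
have x0 : 0 <= (c + L) / del.
  by apply: divr_ge0; [move: hc; rewrite ler_norml; lra| exact: ltW].
have [h1 h2] := andP (truncn_itv x0).
move: (Num.truncn _) h1 h2 => k h1 h2.
split.
  rewrite -(@ltr_nat R); apply: le_lt_trans hM; apply: le_trans h1 _.
  apply: ler_wpM2r; first by rewrite invr_ge0 ltW.
  by move: hc; rewrite ler_norml; lra.
rewrite ler_pdivlMr // in h1; rewrite ltr_pdivrMr // in h2.
rewrite /valof ler_norml -natr1 in h2 *.
apply/andP; split; nra.
Qed.


Lemma rectof_enc (q : rect) k : (rr0 q <= N)%N -> (rr1 q <= N)%N -> (rc0 q <= N)%N -> (rc1 q <= N)%N ->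
  rectof (inord (rr0 q), inord (rr1 q), inord (rc0 q), inord (rc1 q), k) = q.
Proof.
case: q => [[[a b] c] e]; rewrite /rr0 /rr1 /rc0 /rc1 /rectof /= => ha hb hc he.
by rewrite !inordK.
Qed.

Lemma cover_bound :
  (covering_number (@TVclass R N N V L) eps <= (N.+1 * N.+1 * N.+1 * N.+1 * M'.+1) ^ m)%N.
Proof.
set s := [seq dec g | g <- enum {: {ffun 'I_m -> E}}].
have -> : ((N.+1 * N.+1 * N.+1 * N.+1 * M'.+1) ^ m)%N = size s.
  by rewrite size_map -cardE card_ffun !card_prod !card_ord.
apply: cov_le => th [hTV hlinf].
pose f := fm th.
have hb := fm_bound th L hlinf.
have hTVf : TVr f 0 N 0 N <= V by rewrite /f TV_fm.
have tp := t_gt0; have dp := del_gt0.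
have hd' : (N <= 0 + 2 ^ d)%N by rewrite add0n.
have [P [cv al sm sz]] := @rpartition _ f t tp d 0 N 0 N
   (goodq_full N) hd' hd'.
pose prop q c := `|c| <= L /\ err f (rr0 q) (rr1 q) (rc0 q) (rc1 q) c <= 4 * TVq f q ^+ 2.
pose cf q := match pselect (exists c, prop q c) with
             | left h => projT1 (cid h) | right _ => 0 end.
have hcf : forall q, goodq q -> prop q (cf q).
  move=> q gq; rewrite /cf; case: pselect => [h|h].
    exact: (projT2 (cid h)).
  by exfalso; apply: h; apply: (@exists_c _ f L (ltW L0) hb q gq).
pose kq q := Num.truncn ((cf q + L) / del).
pose enc q : E := (inord (rr0 q), inord (rr1 q), inord (rc0 q), inord (rc1 q), inord (kq q)).
pose pad : E := (ord0, ord0, ord0, ord0, ord0).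
pose g := [ffun k : 'I_m => nth pad (map enc P) k].
have alP : forall q, q \in P -> [/\ goodq q, subq q (0, N, 0, N) & TVq f q <= t].
  by move=> q qP; move/allP: al => /(_ q qP) /andP[/andP[-> ->] ->].
have encP : forall q, q \in P -> rectof (enc q) = q /\ val (enc q).2 = kq q.
  move=> q qP; have [gq sq _] := alP q qP.
  move: (gq) => /and4P[a1 a2 _ _]; move: (sq) => /and4P[a3 a4 a5 a6].
  split; first by apply: rectof_enc; rewrite /rr0 /rr1 /rc0 /rc1 /= in a1 a2 a3 a4 a5 a6 *; clear -a1 a2 a3 a4 a5 a6; lia.
  by rewrite /= inordK //; have [+ _] := round (cf q) (proj1 (hcf q gq)); rewrite /kq.
have sizeP : (size P <= m)%N.
  apply: hm; apply: le_trans sz _; rewrite lerD2l.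
  apply: ler_wpM2r; first by rewrite invr_ge0 ltW.
  by apply: ler_wpM2l => //; apply: mulr_ge0.
have key : forall i j : 'I_N, exists q, [/\ q \in P, inR q i j & dec g i j = valof (kq q)].
  move=> i j.
  have /hasP [q0 q0P hq0] : has (fun q => inR q i j) P.
    by apply: cv; rewrite /inR /rr0 /rr1 /rc0 /rc1 /= !ltn_ord.
  rewrite /dec mxE; case: pickP => [k hk|hn].
    move: hk; rewrite /g ffunE; case: (ltnP k (size P)) => hkP.
      rewrite (nth_map q0) //; set q := nth q0 P k.
      have qP : q \in P by apply: mem_nth.
      have [e1 e2] := encP q qP.
      by rewrite e1 e2 => hi; exists q.
    by rewrite nth_default ?size_map // /rectof /inR /rr0 /rr1 /=.
  exfalso.
  have hidx : (index q0 P < m)%N by apply: leq_trans sizeP; rewrite index_mem.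
  move: (hn (Ordinal hidx)); rewrite /g ffunE /= (nth_map q0) ?index_mem //.
  by rewrite nth_index // (proj1 (encP q0 q0P)) hq0.
exists (dec g); first by apply: map_f; rewrite mem_enum.
apply: frob_le; first exact: ltW.
pose F i j q := if inR q i j then (f i j - cf q) ^+ 2 else 0.
have pw : forall i j : 'I_N, (th i j - dec g i j) ^+ 2 <= 2 * \sum_(q <- P) F i j q + 2 * del ^+ 2.
  move=> i j; have [q [qP hin ->]] := key i j.
  have [gq _ _] := alP q qP.
  have [_ hr] := round (cf q) (proj1 (hcf q gq)).
  have h1 : (f i j - cf q) ^+ 2 <= \sum_(q <- P) F i j q.
    have := @mem_le_sum _ P (F i j) q qP; rewrite /F hin; apply.
    by move=> y; case: ifP => // _; apply: sqr_ge0.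
  rewrite -(fm_ord th i j) -/f.
  have h2 : (cf q - valof (kq q)) ^+ 2 <= del ^+ 2.
    by rewrite -real_normK ?num_real // lerXn2r // ?nnegrE ?normr_ge0 ?ltW.
  exact: sq_tri h1 h2.
apply: le_trans (_ : \sum_(i : 'I_N) \sum_(j : 'I_N) (2 * \sum_(q <- P) F i j q + 2 * del ^+ 2) <= _).
  by apply: ler_sum => i _; apply: ler_sum => j _; apply: pw.
have ex : \sum_(i : 'I_N) \sum_(j : 'I_N) \sum_(q <- P) F i j q
    = \sum_(q <- P) err f (rr0 q) (rr1 q) (rc0 q) (rc1 q) (cf q).
  rewrite (eq_bigr (fun i : 'I_N => \sum_(q <- P) \sum_(j : 'I_N) F i j q));
    last by move=> i _; rewrite exchange_big.
  rewrite exchange_big /=; apply: eq_big_seq => q qP.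
  have [gq sq _] := alP q qP.
  move: (gq) => /and4P[a1 a2 _ _]; move: (sq) => /and4P[a3 a4 a5 a6].
  rewrite /F /err (sum_rect (fun i j => (f i j - cf q) ^+ 2)) //.
    by rewrite a1 /=; move: a4; rewrite /rr1 /=.
  by rewrite a2 /=; move: a6; rewrite /rc1 /=.
have bnd : \sum_(q <- P) err f (rr0 q) (rr1 q) (rc0 q) (rc1 q) (cf q) <= 4 * t * V.
  apply: le_trans (_ : \sum_(q <- P) (4 * t) * TVq f q <= _).
    rewrite big_seq [X in _ <= X]big_seq; apply: ler_sum => q qP.
    have [gq _ ht] := alP q qP.
    apply: le_trans (proj2 (hcf q gq)) _.
    have h0 := TVr_ge0 f (rr0 q) (rr1 q) (rc0 q) (rc1 q).
    rewrite -/(TVq f q) in h0.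
    rewrite expr2 -mulrA; apply: ler_wpM2l => //.
    by rewrite mulrC; apply: ler_wpM2r.
  rewrite -mulr_sumr; apply: ler_wpM2l; first by apply: mulr_ge0 => //; apply: ltW.
  exact: le_trans sm hTVf.
rewrite (eq_bigr (fun i : 'I_N => 2 * \sum_(j : 'I_N) \sum_(q <- P) F i j q + 2 * del ^+ 2 *+ N));
  last by move=> i _; rewrite big_split /= -mulr_sumr sumr_const card_ord.
rewrite big_split /= -mulr_sumr sumr_const card_ord ex.
have ht : t * (16 * V) = eps ^+ 2 by rewrite /t divfK // mulf_neq0 // lt0r_neq0.
have hdl : del * (2 * N%:R) = eps by rewrite /del divfK // mulf_neq0 // pnatr_eq0.
have E1 : 2 * (4 * t * V) * 2 = eps ^+ 2 by exact: gen1 ht.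
have E2 : 2 * del ^+ 2 *+ N *+ N * 2 = eps ^+ 2 by exact: gen3 hdl.
have hz : 2 * \sum_(q <- P) err f (rr0 q) (rr1 q) (rc0 q) (rc1 q) (cf q) <= 2 * (4 * t * V).
  by apply: ler_wpM2l.
exact: (fin_ineq _ _ _ _ E1 E2 hz).
Qed.
End Cover.

Lemma final_arith {R : realType} (l2 l Y K m A tl : R) :
  0 < l2 -> l2 <= l -> l2 <= Y -> 0 <= K -> 0 <= tl -> tl * l2 <= l ->
  0 <= m -> m <= 1 + 48 * (tl + 2) * K -> 0 <= A -> A <= 8 * l + l2 + Y ->
  m * A <= (1 + 144 / l2) * (10 / l2) * l * Y * Num.max (K * l) 1.
Proof.
move=> l20 hl hY K0 tl0 htl m0 hm A0 hA.
set w := 1 / l2.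
have w0 : 0 < w by rewrite /w divr_gt0.
have lw : l2 * w = 1 by rewrite /w mul1r mulfV // lt0r_neq0.
have hlw : 1 <= l * w.
  by rewrite -lw; apply: ler_wpM2r => //; apply: ltW.
have hYw : 1 <= Y * w.
  by rewrite -lw; apply: ler_wpM2r => //; apply: ltW.
have htw : tl <= l * w.
  have : tl * l2 * w <= l * w by apply: ler_wpM2r => //; apply: ltW.
  by rewrite -mulrA lw mulr1.
have l0 : 0 <= l by apply: le_trans hl; apply: ltW.
have Y0 : 0 <= Y by apply: le_trans hY; apply: ltW.
set Mx := Num.max (K * l) 1.
have M1 : 1 <= Mx by rewrite /Mx le_max lexx orbT.
have MK : K * l <= Mx by rewrite /Mx le_max lexx.
have h1 : tl + 2 <= 3 * (l * w) by lra.
have h2 : m <= 1 + 144 * w * (K * l).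
  apply: le_trans hm _.
  have : 48 * (tl + 2) * K <= 48 * (3 * (l * w)) * K.
    by apply: ler_wpM2r => //; apply: ler_wpM2l.
  have -> : 144 * w * (K * l) = 48 * (3 * (l * w)) * K by ring.
  lra.
have h3 : m <= (1 + 144 * w) * Mx.
  apply: le_trans h2 _.
  have : 144 * w * (K * l) <= 144 * w * Mx by apply: ler_wpM2l => //; nra.
  nra.
have h4 : A <= 10 * w * l * Y.
  apply: le_trans hA _.
  have a1 : 8 * l <= 8 * l * (Y * w) by nra.
  have a2 : l2 <= Y by [].
  have a3 : Y <= Y * (l * w) by nra.
  have -> : 10 * w * l * Y = 8 * l * (Y * w) + 2 * (Y * (l * w)) by ring.
  lra.
have -> : (1 + 144 / l2) * (10 / l2) * l * Y * Mx = ((1 + 144 * w) * Mx) * (10 * w * l * Y).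
  by rewrite /w !mul1r; ring.
apply: ler_pM => //.
Qed.

Lemma gen_xm {R : realType} (a V e : R) : 0 < V -> 0 < e ->
  3 * a * V / (e ^+ 2 / (16 * V)) = 48 * a * (V ^+ 2 / e ^+ 2).
Proof. by move=> V0 e0; rewrite invf_div; ring. Qed.

Lemma gen_del {R : realType} (L e N : R) : 2 * L / (e / (2 * N)) = 2 * (2 * L * N / e).
Proof. by rewrite invf_div; ring. Qed.

Lemma aux1 {R : realType} (a X : R) : a <= 2 * X -> a + 1 <= 2 * (1 + X).
Proof. lra. Qed.

Lemma succ_le_sq k : (2 <= k)%N -> (k.+1 <= k * k)%N.
Proof. nia. Qed.

Lemma ln_nat_ge0 {R : realType} k : (0 < k)%N -> 0 <= ln (k%:R : R).
Proof. by move=> k0; apply: ln_ge0; rewrite ler1n. Qed.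

Lemma ln_le_nat {R : realType} a b : (0 < a)%N -> (a <= b)%N -> ln (a%:R : R) <= ln (b%:R).
Proof.
move=> a0 ab; rewrite ler_ln ?posrE ?ltr0n //; first by rewrite ler_nat.
exact: leq_trans ab.
Qed.

Lemma ln_cov_le {R : realType} (c B : nat) : (c <= B)%N -> (0 < B)%N ->
  ln (c%:R : R) <= ln (B%:R).
Proof.
move=> cB B0; case: (posnP c) => [->|c0]; last exact: ln_le_nat.
by rewrite ln0 // ln_nat_ge0.
Qed.

Lemma ln_natX {R : realType} a k : (0 < a)%N -> ln (((a ^ k)%N)%:R : R) = k%:R * ln (a%:R).
Proof. by move=> a0; rewrite natrX lnXn ?ltr0n // mulr_natl. Qed.

Lemma ln_natM {R : realType} a b : (0 < a)%N -> (0 < b)%N ->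
  ln (((a * b)%N)%:R : R) = ln (a%:R) + ln (b%:R).
Proof. by move=> a0 b0; rewrite natrM lnM ?posrE ?ltr0n. Qed.

Theorem proposition4p4 (R : realType) :
  exists C : R, 0 < C /\
    forall (n : nat) (V L eps : R), (2 <= n)%N -> 0 < V -> 0 < L -> 0 < eps ->
      ln ((covering_number (@TVclass R n n V L) eps)%:R)
        <= C * ln (n%:R) * ln (1 + 2 * L * n%:R / eps)
             * Num.max (V ^+ 2 * ln (n%:R) / eps ^+ 2) 1.
Proof.
set l2 : R := ln 2.
have l20 : 0 < l2 by apply: ln_gt0; lra.
exists ((1 + 144 / l2) * (10 / l2)); split.
  by apply: mulr_gt0; [apply: addr_gt0 => //; apply: divr_gt0|apply: divr_gt0].
case=> [|n] V L eps hn V0 L0 e0; first by [].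
set N := n.+1.
set X := 2 * L * N%:R / eps.
have X0 : 0 <= X by apply: divr_ge0; [apply: mulr_ge0; [lra|]|lra].
have hl : l2 <= ln (N%:R : R).
  by rewrite /l2 ler_ln ?posrE ?ltr0n // ler_nat.
have C0 : 0 < (1 + 144 / l2) * (10 / l2).
  by apply: mulr_gt0; [apply: addr_gt0 => //; apply: divr_gt0|apply: divr_gt0].
have Y0 : 0 <= ln (1 + X) by apply: ln_ge0; lra.
have Mx1 : 1 <= Num.max (V ^+ 2 * ln (N%:R) / eps ^+ 2) 1 by rewrite le_max lexx orbT.
have RHS0 : 0 <= (1 + 144 / l2) * (10 / l2) * ln (N%:R) * ln (1 + X)
     * Num.max (V ^+ 2 * ln (N%:R) / eps ^+ 2) 1.
  apply: mulr_ge0; last lra.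
  apply: mulr_ge0 => //; apply: mulr_ge0; first exact: ltW.
  lra.
case: (ltP X 1) => hX.
  have cov1 : (covering_number (@TVclass R N N V L) eps <= size [:: (0 : 'M[R]_(N, N))%R])%N.
    apply: cov_le => th [_ hlinf]; exists 0; first by rewrite inE.
    apply: frob_le; first exact: ltW.
    have hb := fm_bound th L hlinf.
    apply: le_trans (_ : \sum_(i : 'I_N) \sum_(j : 'I_N) L ^+ 2 <= _).
      apply: ler_sum => i _; apply: ler_sum => j _.
      rewrite mxE subr0 -real_normK ?num_real // lerXn2r ?nnegrE ?normr_ge0 ?(ltW L0) //.
      by have := hb i j; rewrite fm_ord.
    rewrite !sumr_const !card_ord -[L ^+ 2 *+ N]mulr_natr -[_ *+ N]mulr_natr.
    have -> : L ^+ 2 * N%:R * N%:R = (L * N%:R) ^+ 2 by rewrite exprMn expr2 mulrA.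
    have : L * N%:R * 2 < eps.
      have -> : L * N%:R * 2 = 2 * L * N%:R by rewrite mulrC mulrA.
      by move: hX; rewrite /X ltr_pdivrMr // mul1r.
    have LN0 : 0 <= L * N%:R by apply: mulr_ge0 => //; exact: ltW.
    by move=> h; rewrite lerXn2r ?nnegrE ?(ltW e0) //; lra.
  apply: le_trans RHS0; apply: ln_le0.
  by move: cov1; rewrite -(ler_nat R) /=.
pose tl := trunc_log 2 N.
pose d := tl.+1.
have hd : (N <= 2 ^ d)%N by apply: ltnW; apply: trunc_log_ltn.
pose t : R := eps ^+ 2 / (16 * V).
pose del : R := eps / (2 * N%:R).
have tp : 0 < t by rewrite /t divr_gt0 // ?exprn_gt0 // mulr_gt0.
have dp : 0 < del by rewrite /del divr_gt0 // mulr_gt0.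
pose M' := Num.truncn (2 * L / del).
pose xm : R := 1 + 3 * d.+1%:R * V / t.
have xm0 : 0 <= xm.
  by rewrite /xm; apply: addr_ge0 => //; apply: divr_ge0; [apply: mulr_ge0; [apply: mulr_ge0|lra]|lra].
pose m := Num.truncn xm.
have hM : 2 * L / del < M'.+1%:R by apply: truncnS_gt.
have hm : forall k : nat, k%:R <= xm -> (k <= m)%N.
  by move=> k hk; rewrite /m truncn_ge_nat.
have cb := @cover_bound R n V L eps d M' m V0 L0 e0 hd hM hm.
have N0 : (0 < N)%N by [].
have a0 : (0 < N.+1)%N by [].
have b0 : (0 < M'.+1)%N by [].
have B0 : (0 < (N.+1 * N.+1 * N.+1 * N.+1 * M'.+1) ^ m)%N by rewrite expn_gt0 !muln_gt0.
apply: le_trans (ln_cov_le _ _ cb B0) _.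
rewrite ln_natX ?muln_gt0 // !ln_natM ?muln_gt0 //.
set l := ln (N%:R : R).
set Y := ln (1 + X).
set K : R := V ^+ 2 / eps ^+ 2.
have -> : V ^+ 2 * l / eps ^+ 2 = K * l by rewrite /K mulrAC.
have hY : l2 <= Y.
  by rewrite /l2 /Y ler_ln ?posrE; lra.
have K0 : 0 <= K by apply: divr_ge0; apply: sqr_ge0.
have htl : tl%:R * l2 <= l.
  have := @ln_le_nat R _ _ (expn_gt0 2 tl) (trunc_logP (isT : (1 < 2)%N) N0).
  by rewrite ln_natX.
have hmx : m%:R <= 1 + 48 * (tl%:R + 2) * K.
  apply: le_trans (_ : m%:R <= xm) _; first by rewrite /m truncn_le.
  rewrite /xm /t /K gen_xm //.
  have -> : (d.+1%:R : R) = tl%:R + 2 by rewrite /d -addn2 natrD.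
  by [].
have ha : ln (N.+1%:R : R) <= 2 * l.
  have := @ln_le_nat R N.+1 (N * N) a0 (succ_le_sq _ hn).
  by rewrite ln_natM // -/l => h; apply: le_trans h _; lra.
have hb : ln (M'.+1%:R : R) <= l2 + Y.
  have hM2 : M'.+1%:R <= 2 * (1 + X).
    rewrite -natr1; apply: aux1.
    have -> : 2 * X = 2 * L / del by rewrite /del /X gen_del.
    rewrite truncn_le; apply: divr_ge0; [apply: mulr_ge0 => //; exact: ltW|exact: ltW].
  have p1 : 0 < 1 + X by apply: ltr_pwDl.
  rewrite /l2 /Y -lnM ?posrE //.
  by rewrite ler_ln ?posrE ?ltr0n // mulr_gt0.
have A0 : 0 <= ln (N.+1%:R : R) + ln N.+1%:R + ln N.+1%:R + ln N.+1%:R + ln M'.+1%:R.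
  by rewrite !addr_ge0 // ln_nat_ge0.
apply: (@final_arith R l2 l Y K m%:R _ tl%:R) => //.
all: try lra.
Qed.
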